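(* For any finite metric spaces $(X,d_X)$ and $(Y,d_Y)$, \[d_{\mathrm{B}}\left(\mathrm{dgm}_0(\mathcal{R}_\bullet(X,d_X)),\mathrm{dgm}_0(\mathcal{R}_\bullet(Y,d_Y))\right)\le d_{\mathrm{I}}\left(\beta_0^{(X,d_X)},\beta_0^{(Y,d_Y)}\right).\]
   Context: For a finite metric space $(X,d_X)$ and $\delta\in\mathbf{R}$, the Rips complex $\mathcal{R}_\delta(X,d_X)$ is the simplicial complex on $X$ whose simplices are the nonempty $\sigma\subseteq X$ with $d_X(x,x')\le\delta$ for all $x,x'\in\sigma$; $\mathcal{R}_\bullet(X,d_X)$ is the filtration $\delta\mapsto\mathcal{R}_\delta(X,d_X)$ with inclusions. $\mathrm{dgm}_0(\mathcal{R}_\bullet(X,d_X))$ is the persistence diagram (multiset of birth–death pairs $(b,d)$ with $b\le d$, $d$ possibly $+\infty$) of the persistence module $\delta\mapsto\mathrm{H}_0(\mathcal{R}_\delta(X,d_X))$ over a fixed field. The bottleneck distance between multisets $X_1,X_2$ of points of $\{(u_1,u_2)\in(\mathbf{R}\cup\{\pm\infty\})^2:u_1\le u_2\}$: a partial injection $\alpha:X_1\nrightarrow X_2$ is an $\varepsilon$-matching if $\|\mathbf{u}-\alpha(\mathbf{u})\|_\infty\le\varepsilon$ for matched $\mathbf{u}$ and $u_2-u_1\le2\varepsilon$ for every unmatched $\mathbf{u}=(u_1,u_2)$ in $X_1$ or $X_2$; $d_{\mathrm{B}}(X_1,X_2)$ is the infimum of $\varepsilon$ admitting an $\varepsilon$-matching.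 The Betti-0 function $\beta_0^{(X,d_X)}:\mathbf{R}_+\to\mathbf{Z}_+$ is $\delta\mapsto\dim\mathrm{H}_0(\mathcal{R}_\delta(X,d_X))$. For functions $F,G:\mathbf{R}_+\to\mathbf{Z}_+$, $d_{\mathrm{I}}(F,G):=\inf\{\varepsilon\ge0:\forall\delta\in\mathbf{R}_+,\ F(\delta)\ge G(\delta+\varepsilon),\ G(\delta)\ge F(\delta+\varepsilon)\}$. *)

(* Defs.v *)
From HB Require Import structures.
From mathcomp Require Import all_boot all_order all_algebra.
From mathcomp Require Import all_classical all_reals.
From mathcomp Require Import ereal.

Set Implicit Arguments.
Unset Strict Implicit.
Unset Printing Implicit Defensive.

Import Order.TTheory GRing.Theory Num.Theory.
Local Open Scope ring_scope.
Local Open Scope classical_set_scope.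

Section Defs.
Variable R : realType.

Definition is_metric (T : finType) (d : T -> T -> R) : Prop :=
  [/\ (forall x y, d x y = 0 <-> x = y),
      (forall x y, d x y = d y x) &
      (forall x y z, d x z <= d x y + d y z)].

(* H_0 of the Rips complex R_delta(X,d) over a field F, written out from    *)
(* its chain groups:  C_0 = span of the 0-simplices {x} (d x x <= delta),   *)
(* B_0 = image of the boundary of the 1-simplices {x,y} (d x y <= delta),   *)
(* spanned by e_x - e_y.  Vectors of F^X are row vectors indexed by         *)
(* 'I_#|T| via enum_rank / enum_val.                                        *)
Variables (F : fieldType) (T : finType) (d : T -> T -> R).

Definition rips_vertex (delta : R) (x : T) : bool := d x x <= delta.
Definition rips_edge (delta : R) (x y : T) : bool := (x != y) && (d x y <= delta).

(* rows: the 0-simplices of R_delta (zero rows for non-simplices) *)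
Definition C0mx (delta : R) : 'M[F]_(#|T|, #|T|) :=
  \matrix_(i < #|T|, j < #|T|)
     (if rips_vertex delta (enum_val i) && (i == j) then 1 else 0).

(* rows: boundaries of the 1-simplices of R_delta (ordered pairs) *)
Definition B0mx (delta : R) : 'M[F]_(#|{: T * T}|, #|T|) :=
  \matrix_(k < #|{: T * T}|, j < #|T|)
     (let p := enum_val k in
      if rips_edge delta p.1 p.2
      then (j == enum_rank p.1)%:R - (j == enum_rank p.2)%:R
      else 0).

Definition H0dim (delta : R) : nat := (\rank (C0mx delta) - \rank (B0mx delta))%N.

(* rank of the map H_0(R_s) -> H_0(R_t) (s <= t) induced by inclusion:     *)
(* dim ((C_0(R_s) + B_0(R_t)) / B_0(R_t)).                                   *)
Definition H0rank (s t : R) : nat :=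
  (\rank (C0mx s + B0mx t)%MS - \rank (B0mx t))%N.

(* Betti-0 function delta |-> dim H_0(R_delta)  (only used on R_+) *)
Definition betti0 (delta : R) : nat := H0dim delta.

(* Persistence diagrams: finite multisets (sequences) of points (b, d) of   *)
(* the extended plane.  D is the 0-th persistence diagram of the Rips       *)
(* filtration iff the module delta |-> H_0(R_delta) decomposes as the       *)
(* direct sum of interval modules F[b,d) for (b,d) in D, which (for a       *)
(* pointwise finite-dimensional module) is equivalent to the rank invariant *)
(* identity below; each interval is nonempty (b < d).                       *)
Definition is_dgm0 (D : seq (\bar R * \bar R)) : Prop :=
  all (fun p => (p.1 < p.2)%E) D /\
  forall s t : R, s <= t ->
    H0rank s t = count (fun p => (p.1 <= s%:E)%E && (t%:E < p.2)%E) D.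

End Defs.

Section Bottleneck.
Variable R : realType.

(* |a - b| on extended reals, with |+oo - +oo| = |-oo - -oo| = 0 *)
Definition edist (a b : \bar R) : \bar R :=
  match a, b with
  | EFin x, EFin y => `|x - y|%:E
  | _, _ => if a == b then 0%E else +oo%E
  end.

Definition linf (u v : \bar R * \bar R) : \bar R :=
  Order.max (edist u.1 v.1) (edist u.2 v.2).

Definition near_diag (eps : R) (u : \bar R * \bar R) : bool :=
  (u.2 <= u.1 + (2 * eps)%:E)%E.

Definition pt0 : \bar R * \bar R := (0%E, 0%E).

Definition is_eps_matching (eps : R) (X1 X2 : seq (\bar R * \bar R))
  (alpha : 'I_(size X1) -> option 'I_(size X2)) : Prop :=
  [/\ (forall i j k, alpha i = Some k -> alpha j = Some k -> i = j),
      (forall i k, alpha i = Some k ->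
          (linf (nth pt0 X1 i) (nth pt0 X2 k) <= eps%:E)%E),
      (forall i, alpha i = None -> near_diag eps (nth pt0 X1 i)) &
      (forall k : 'I_(size X2), (forall i, alpha i <> Some k) ->
          near_diag eps (nth pt0 X2 k))].
Arguments is_eps_matching : clear implicits.

Definition dB (X1 X2 : seq (\bar R * \bar R)) : \bar R :=
  ereal_inf [set e%:E | e in [set e : R | 0 <= e /\
     exists alpha, is_eps_matching e X1 X2 alpha]].

Definition dI (f g : R -> nat) : \bar R :=
  ereal_inf [set e%:E | e in [set e : R | 0 <= e /\
     forall delta : R, 0 <= delta ->
       (g (delta + e)%R <= f delta)%N /\ (f (delta + e)%R <= g delta)%N]].

End Bottleneck.

(* Main.v *)
Require Import Defs.
From mathcomp Require Import all_boot all_order all_algebra.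
From mathcomp Require Import all_classical all_reals.
From mathcomp Require Import ereal.
From mathcomp Require Import lra.

Module M_Sub1.
Set Implicit Arguments.
Unset Strict Implicit.
Unset Printing Implicit Defensive.
Import Order.TTheory GRing.Theory Num.Theory.
Local Open Scope ring_scope.

Section One.
Variables (R : realType) (F : fieldType) (T : finType) (d : T -> T -> R).
Hypothesis hd : is_metric d.

Lemma dxx x : d x x = 0.
Proof. by case: hd => h _ _; apply/h. Qed.

Lemma C0_full t : 0 <= t -> C0mx F d t = 1%:M.
Proof.
move=> t0; apply/matrixP => i j; rewrite !mxE /rips_vertex dxx t0 /=.
by case: (i == j).
Qed.

Lemma C0_zero t : t < 0 -> C0mx F d t = 0.
Proof.
move=> t0; apply/matrixP => i j; rewrite !mxE /rips_vertex dxx.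
by rewrite leNgt t0.
Qed.

Lemma H0rank_pos s t : 0 <= s -> 0 <= t -> H0rank F d s t = betti0 F d t.
Proof.
move=> s0 t0; rewrite /H0rank /betti0 /H0dim (C0_full s0) (C0_full t0) mxrank1.
have : row_full (1%:M + B0mx F d t)%MS by rewrite -sub1mx addsmxSl.
by move/eqP => ->.
Qed.

Lemma H0rank_neg s t : s < 0 -> H0rank F d s t = 0%N.
Proof.
by move=> s0; rewrite /H0rank (C0_zero s0) adds0mx subnn.
Qed.
End One.

End M_Sub1.
Import M_Sub1.

Module M_Sub2.
Set Implicit Arguments.
Unset Strict Implicit.
Unset Printing Implicit Defensive.
Import Order.TTheory GRing.Theory Num.Theory.
Local Open Scope ring_scope.

Lemma count_le_in (T : eqType) (P Q : pred T) (s : seq T) :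
  {in s, forall y, P y -> Q y} -> (count P s <= count Q s)%N.
Proof.
elim: s => //= y s IH H.
have Hs : {in s, forall y, P y -> Q y} by move=> z zs; apply: H; rewrite inE zs orbT.
have := IH Hs; case Py: (P y); case Qy: (Q y) => //=.
- by rewrite H ?inE ?eqxx in Qy.
- by move=> h; rewrite add0n; apply: leq_trans h (leq_addl _ _).
Qed.

Lemma count_lt (T : eqType) (P Q : pred T) (s : seq T) x :
  {in s, forall y, P y -> Q y} -> x \in s -> Q x -> ~~ P x ->
  (count P s < count Q s)%N.
Proof.
elim: s => //= y s IH H; rewrite inE => /orP[/eqP<-|xs] Qx nPx.
  rewrite Qx (negbTE nPx) /= add0n add1n ltnS.
  by apply: count_le_in => z zs; apply: H; rewrite inE zs orbT.
have Hs : {in s, forall y, P y -> Q y} by move=> z zs; apply: H; rewrite inE zs orbT.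
have := IH Hs xs Qx nPx.
case Py: (P y); case Qy: (Q y) => //=; last by move=> h; apply: ltn_addl.
by rewrite H ?inE ?eqxx in Qy.
Qed.

End M_Sub2.
Import M_Sub2.

Module M_Sub3.
Set Implicit Arguments.
Unset Strict Implicit.
Unset Printing Implicit Defensive.
Import Order.TTheory GRing.Theory Num.Theory.
Local Open Scope ring_scope.

Section Dgm.
Variables (R : realType) (F : fieldType) (T : finType) (d : T -> T -> R).
Hypothesis hd : is_metric d.
Variable D : seq (\bar R * \bar R).
Hypothesis hD : is_dgm0 F d D.

Lemma fst0 p : p \in D -> p.1 = 0%E.
Proof.
case: hD => hall hc pD.
have lt12 : (p.1 < p.2)%E := (allP hall) p pD.
have neg : forall s, s < 0 -> ~ ((p.1 <= s%:E)%E && (s%:E < p.2)%E).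
  move=> s s0 H; have := hc s s (lexx s); rewrite H0rank_neg // => /esym/eqP.
  rewrite -leqn0 leqNgt -has_count => /negP; apply; apply/hasP; exists p => //.
case: p pD lt12 neg => a b /= pD lt12 neg.
case: a pD lt12 neg => [r| |] pD lt12 neg.
- case: (ltgtP r 0) => [r0|r0|->] //.
  + by exfalso; apply: (neg r r0); rewrite lexx lt12.
  + exfalso; have h1 := hc 0 r (ltW r0); have h2 := hc r r (lexx r).
    rewrite (H0rank_pos F hd (lexx 0) (ltW r0)) in h1.
    rewrite (H0rank_pos F hd (ltW r0) (ltW r0)) in h2.
    have : (count (fun p => (p.1 <= 0%:E)%E && (r%:E < p.2)%E) D <
            count (fun p => (p.1 <= r%:E)%E && (r%:E < p.2)%E) D)%N.
      apply: (count_lt (x := (r%:E, b))) => //=.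
      * move=> y _ /andP[y1 y2]; rewrite y2 andbT; apply: le_trans y1 _.
        by rewrite lee_fin ltW.
      * by rewrite lexx lt12.
      * by rewrite lee_fin leNgt r0.
    by rewrite -h1 -h2 ltnn.
- by have := lt_le_trans lt12 (leey b); rewrite ltxx.
- exfalso; case: b pD lt12 neg => [y| |] pD lt12 neg.
  + have h1 := ler_norm (- y); rewrite normrN in h1.
    have h2 := normr_ge0 y.
    apply: (neg (- `|y| - 1)); first lra.
    by rewrite leNye /= lte_fin; lra.
  + by apply: (neg (-1)); rewrite ?ltrN10 // leNye ltry.
  + by rewrite ltxx in lt12.
Qed.

Lemma cnt_betti (t : R) : 0 <= t ->
  count (fun p => (t%:E < p.2)%E) D = betti0 F d t.
Proof.
move=> t0; case: hD => _ hc; rewrite -(H0rank_pos F hd t0 t0) (hc t t (lexx _)).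
by apply: eq_in_count => p pD /=; rewrite fst0 // lee_fin t0.
Qed.

Lemma snd_pos p : p \in D -> (0 < p.2)%E.
Proof.
move=> pD; case: hD => hall _; rewrite -(fst0 pD); exact: (allP hall) p pD.
Qed.
End Dgm.

End M_Sub3.
Import M_Sub3.

Module M_Sub4.
Set Implicit Arguments.
Unset Strict Implicit.
Unset Printing Implicit Defensive.
Import Order.TTheory GRing.Theory Num.Theory.
Local Open Scope ring_scope.

Lemma count_card (T : eqType) (P : pred T) (s : seq T) x0 :
  count P s = #|[set j : 'I_(size s) | P (nth x0 s j)]|.
Proof.
rewrite -[in LHS](mkseq_nth x0 s) /mkseq count_map -val_enum_ord count_map.
rewrite cardE /enum_mem size_filter -enumT /=.
set t := enum _.
elim: t => //= j t ->; rewrite !inE //.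
Qed.

Section Rank.
Variables (R : realType) (s : seq (\bar R * \bar R)).
Local Notation n := (size s).
Definition av (j : 'I_n) : \bar R := (nth (pt0 R) s j).2.
Definition prec (j i : 'I_n) : bool :=
  (av i < av j)%E || ((av j == av i) && (j < i)%N).
Definition rk (i : 'I_n) : nat := #|[set j | prec j i]|.
Definition cnt (t : R) : nat := #|[set j : 'I_n | (t%:E < av j)%E]|.

Lemma cnt_count t : cnt t = count (fun p => (t%:E < p.2)%E) s.
Proof. by rewrite (count_card _ _ (pt0 R)). Qed.

Lemma cnt_le t : (cnt t <= n)%N.
Proof. by rewrite /cnt -[X in (_ <= X)%N]card_ord max_card. Qed.

Lemma prec_irr i : ~~ prec i i.
Proof. by rewrite /prec ltxx ltnn andbF. Qed.

Lemma prec_trans i j k : prec i j -> prec j k -> prec i k.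
Proof.
rewrite /prec => /orP[h1|/andP[/eqP e1 l1]] /orP[h2|/andP[/eqP e2 l2]].
- by rewrite (lt_trans h2 h1).
- by rewrite -e2 h1.
- by rewrite e1 h2.
- by rewrite e1 e2 eqxx (ltn_trans l1 l2) orbT.
Qed.

Lemma prec_total i j : i != j -> prec i j || prec j i.
Proof.
move=> ij; rewrite /prec.
case: (ltgtP (av i) (av j)) => [h|h|h]; rewrite ?orbT //.
rewrite /=; case: (ltngtP i j) => // /val_inj e.
by rewrite e eqxx in ij.
Qed.

Lemma rk_lt i j : prec j i -> (rk j < rk i)%N.
Proof.
move=> ji; rewrite /rk; apply: proper_card; apply/properP; split.
  by apply/fintype.subsetP => k; rewrite !inE => kj; apply: prec_trans kj ji.
by exists j; rewrite !inE ?ji // (negbTE (prec_irr j)).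
Qed.

Lemma rk_inj : injective rk.
Proof.
move=> i j e; apply/eqP; apply/negPn/negP => /prec_total /orP[h|h].
  by have := rk_lt h; rewrite e ltnn.
by have := rk_lt h; rewrite e ltnn.
Qed.

Lemma rk_bound i : (rk i < n)%N.
Proof.
rewrite /rk; have : (#|[set j | prec j i]| < #|'I_n|)%N.
  apply: proper_card; apply/properP; split; first exact/fintype.subsetP.
  by exists i => //; rewrite inE (negbTE (prec_irr i)).
by rewrite card_ord.
Qed.

Lemma rk_key i t : (t%:E < av i)%E = (rk i < cnt t)%N.
Proof.
apply/idP/idP => h.
  apply: proper_card; apply/properP; split.
    apply/fintype.subsetP => k; rewrite !inE /prec => /orP[h1|/andP[/eqP e1 _]].
      exact: lt_trans h1.
    by rewrite e1.
  by exists i; rewrite !inE ?h // (negbTE (prec_irr i)).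
apply/negP => /negP; rewrite -leNgt => hi.
have : (cnt t <= rk i)%N.
  apply: subset_leq_card; apply/fintype.subsetP => k; rewrite !inE => hk.
  by rewrite /prec (le_lt_trans hi hk).
by rewrite leqNgt h.
Qed.

Definition rko (i : 'I_n) : 'I_n := Ordinal (rk_bound i).

Lemma rk_onto q : (q < n)%N -> exists i, rk i = q.
Proof.
move=> qn; have inj : injective rko by move=> i j /(congr1 val) /rk_inj.
have [g _ gK] := injF_bij inj.
by exists (g (Ordinal qn)); have := congr1 val (gK (Ordinal qn)).
Qed.
End Rank.

End M_Sub4.
Import M_Sub4.

Module M_Sub5.
Set Implicit Arguments.
Unset Strict Implicit.
Unset Printing Implicit Defensive.
Import Order.TTheory GRing.Theory Num.Theory.
Local Open Scope ring_scope.

Lemma edist_le (R : realType) (e : R) (a b : \bar R) :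
  (0 < a)%E -> (0 < b)%E ->
  (forall t : R, 0 <= t -> ((t + e)%:E < b)%E -> (t%:E < a)%E) ->
  (forall t : R, 0 <= t -> ((t + e)%:E < a)%E -> (t%:E < b)%E) ->
  0 <= e -> (edist a b <= e%:E)%E.
Proof.
move=> a0 b0 h1 h2 e0.
case: a a0 h1 h2 => [x| |] a0 h1 h2; case: b b0 h1 h2 => [y| |] b0 h1 h2 //=.
- rewrite lte_fin in a0; rewrite lte_fin in b0.
  have n1 : ~ (y + e < x).
    by move=> h; have := h2 y (ltW b0); rewrite !lte_fin ltxx => /(_ h).
  have n2 : ~ (x + e < y).
    by move=> h; have := h1 x (ltW a0); rewrite !lte_fin ltxx => /(_ h).
  rewrite lee_fin ler_norml; apply/andP; split.
    by rewrite leNgt; apply/negP => h; apply: n2; lra.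
  by rewrite leNgt; apply/negP => h; apply: n1; lra.
- rewrite lte_fin in a0.
  by have := h1 x (ltW a0) (ltry _); rewrite ltxx.
- rewrite lte_fin in b0.
  by have := h2 y (ltW b0) (ltry _); rewrite ltxx.
Qed.

Section Transfer.
Variables (R : realType) (DX DY : seq (\bar R * \bar R)) (e : R).

Lemma transfer (i : 'I_(size DX)) (k : 'I_(size DY)) :
  rk i = rk k ->
  (forall t : R, 0 <= t -> (cnt DY (t + e) <= cnt DX t)%N) ->
  forall t : R, 0 <= t -> ((t + e)%:E < av k)%E -> (t%:E < av i)%E.
Proof.
move=> hr hc t t0; rewrite !rk_key => h.
by rewrite hr; apply: leq_trans h (hc t t0).
Qed.

Lemma unmatched (i : 'I_(size DX)) :
  (size DY <= rk i)%N ->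
  (forall t : R, 0 <= t -> (cnt DX (t + e) <= cnt DY t)%N) ->
  (av i <= e%:E)%E.
Proof.
move=> hr hc; rewrite leNgt; apply/negP.
have -> : e = 0 + e by rewrite add0r.
rewrite rk_key => h.
have := leq_trans h (hc 0 (lexx 0)).
have := cnt_le DY 0.
move=> a b; have := leq_trans b a; rewrite ltnNge hr //.
Qed.
End Transfer.

End M_Sub5.
Import M_Sub5.

Import Order.TTheory GRing.Theory Num.Theory.

Theorem theorem4p14 (R : realType) (F : fieldType)
  (X : finType) (dX : X -> X -> R) (Y : finType) (dY : Y -> Y -> R)
  (DX DY : seq (\bar R * \bar R)) :
  is_metric dX -> is_metric dY ->
  is_dgm0 F dX DX -> is_dgm0 F dY DY ->
  (dB DX DY <= dI (betti0 F dX) (betti0 F dY))%E.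
Proof.
move=> hX hY hDX hDY.
apply: le_ereal_inf_tmp => _ [e [e0 hint] <-].
have cXY : forall t : R, (0 <= t)%R -> (cnt DY (t + e) <= cnt DX t)%N.
  move=> t t0; have te : (0 <= t + e)%R by rewrite addr_ge0.
  rewrite !cnt_count (cnt_betti hY hDY te) (cnt_betti hX hDX t0).
  exact: (hint t t0).1.
have cYX : forall t : R, (0 <= t)%R -> (cnt DX (t + e) <= cnt DY t)%N.
  move=> t t0; have te : (0 <= t + e)%R by rewrite addr_ge0.
  rewrite !cnt_count (cnt_betti hY hDY t0) (cnt_betti hX hDX te).
  exact: (hint t t0).2.
apply: ereal_inf_lbound; exists e => //; split => //.
pose alpha (i : 'I_(size DX)) : option 'I_(size DY) := [pick k | rk k == rk i].
exists alpha; split.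
- move=> i j k; rewrite /alpha; case: pickP => // k1 /eqP h1 [e1].
  case: pickP => // k2 /eqP h2 [e2]; subst.
  by apply: rk_inj; rewrite -h1 -h2.
- move=> i k; rewrite /alpha; case: pickP => // k1 /eqP h1 [<-].
  rewrite /linf (fst0 hX hDX (mem_nth _ (ltn_ord i))).
  rewrite (fst0 hY hDY (mem_nth _ (ltn_ord k1))) /=.
  rewrite ge_max; apply/andP; split; first by rewrite subr0 normr0 lee_fin.
  apply: edist_le => //.
  + exact: (snd_pos hX hDX (mem_nth _ (ltn_ord i))).
  + exact: (snd_pos hY hDY (mem_nth _ (ltn_ord k1))).
  + by move=> t t0 h; apply: (transfer (k := k1)) h => //; rewrite h1.
  + by move=> t t0 h; apply: (transfer (k := i)) h.
- move=> i; rewrite /alpha; case: pickP => // hn _.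
  have hr : (size DY <= rk i)%N.
    rewrite leqNgt; apply/negP => /rk_onto [k hk].
    by have := hn k; rewrite hk eqxx.
  rewrite /near_diag (fst0 hX hDX (mem_nth _ (ltn_ord i))) add0e.
  apply: le_trans (unmatched hr cYX) _; rewrite lee_fin; lra.
- move=> k hk.
  have hr : (size DX <= rk k)%N.
    rewrite leqNgt; apply/negP => /rk_onto [i hi].
    apply: (hk i); rewrite /alpha; case: pickP => [k1 /eqP h1|/(_ k)]; last first.
      by rewrite hi eqxx.
    by congr Some; apply: rk_inj; rewrite h1 hi.
  rewrite /near_diag (fst0 hY hDY (mem_nth _ (ltn_ord k))) add0e.
  apply: le_trans (unmatched hr cXY) _; rewrite lee_fin; lra.
Qed.
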